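(* For every word $\omega\in[n]^*$, the set $B^M_\omega:=M_\omega B_\omega\subseteq\mathbb{Z}^n$ is a monotone lattice path from $0$ to $u_\omega$: its elements can be listed as $x_0,x_1,\dots,x_m$ with $x_0=0$, $x_m=u_\omega$, and $x_t-x_{t-1}\in\{e_1,\dots,e_n\}$ for all $t=1,\dots,m$.
   Context: Let $[n]=\{1,\dots,n\}$, $e_1,\dots,e_n$ the standard basis of $\mathbb{Z}^n$; $\varepsilon$ is the empty word, $*$ concatenation. For words $\omega$ over $[n]$ define recursively $a^i_\omega,\delta^i_\omega\in\mathbb{Z}^n$: $a^i_\varepsilon=\delta^i_\varepsilon=e_i$; $a^i_{\omega*j}=a^i_\omega$ if $i\ne j$, $a^j_{\omega*j}=a^j_\omega+\delta^j_\omega$; $\delta^j_{\omega*j}=\delta^j_\omega$, $\delta^i_{\omega*j}=\delta^i_\omega-\delta^j_\omega$ for $i\ne j$. Let $B_\varepsilon=\{0\}$, $B_{\omega*j}=B_\omega+\{0,\delta^j_\omega\}$ (Minkowski sum). Let $M_\omega=(\delta^1_\omega\ \cdots\ \delta^n_\omega)^{-1}$ (inverse of the matrix with columns $\delta^i_\omega$). For $k\in[n]$ let $D^k=\mathrm{id}+e_k(\mathbb{1}-e_k)^T$ with $\mathbb{1}=(1,\dots,1)^T$. Define $u_\varepsilon=0$, $u_{\omega*j}=e_j+D^j u_\omega$. *)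

(* Defs.v *)
From HB Require Import structures.
From mathcomp Require Import all_boot all_order all_algebra.
Set Implicit Arguments. Unset Strict Implicit. Unset Printing Implicit Defensive.
Import Order.TTheory GRing.Theory Num.Theory.
Local Open Scope ring_scope.

(* Vectors of Z^n are column vectors 'cV[int]_n; coordinates indexed by 'I_n
   (so [n] = {1..n} is rendered as 'I_n = {0..n-1}).  Words over [n] are
   seq 'I_n, with omega * j = rcons omega j. *)

Definition ev {n} (i : 'I_n) : 'cV[int]_n := delta_mx i 0.

Definition delta_step {n} (D : 'M[int]_n) (j : 'I_n) : 'M[int]_n :=
  \matrix_(r < n, i < n) (if i == j then D r j else D r i - D r j).

(* deltaM w = (delta^1_w ... delta^n_w), column i is delta^i_w *)
Definition deltaM {n} (w : seq 'I_n) : 'M[int]_n := foldl delta_step 1%:M w.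

Definition delta {n} (w : seq 'I_n) (i : 'I_n) : 'cV[int]_n := col i (deltaM w).

Definition Mw {n} (w : seq 'I_n) : 'M[int]_n := invmx (deltaM w).

(* B on a reversed word: B_eps = {0}, B_{w*j} = B_w + {0, delta^j_w} *)
Fixpoint Brev {n} (r : seq 'I_n) : seq 'cV[int]_n :=
  match r with
  | [::] => [:: 0]
  | j :: r' => Brev r' ++ [seq x + delta (rev r') j | x <- Brev r']
  end.

Definition Bw {n} (w : seq 'I_n) : seq 'cV[int]_n := Brev (rev w).

Definition BMw {n} (w : seq 'I_n) : seq 'cV[int]_n := [seq Mw w *m x | x <- Bw w].

Definition Dk {n} (k : 'I_n) : 'M[int]_n :=
  1%:M + \matrix_(r < n, c < n) ((r == k) && (c != k))%:R.

Definition uw {n} (w : seq 'I_n) : 'cV[int]_n :=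
  foldl (fun u j => ev j + Dk j *m u) 0 w.

Definition unit_step {n} : rel 'cV[int]_n := fun x y => [exists i : 'I_n, y - x == ev i].

(* Main.v *)
Require Import Defs.
From HB Require Import structures.
From mathcomp Require Import all_boot all_order all_algebra.
Import Order.TTheory GRing.Theory Num.Theory.
Local Open Scope ring_scope.

Section Aux.
Variable n : nat.
Implicit Types (j : 'I_n) (A : 'M[int]_n).

Definition Nk j : 'M[int]_n := \matrix_(r < n, c < n) ((r == j) && (c != j))%:R.
Definition Ek j : 'M[int]_n := 1%:M - Nk j.

Lemma NkNk j : Nk j *m Nk j = 0.
Proof.
apply/matrixP => r i; rewrite !mxE big1 // => k _; rewrite !mxE.
by case: (k == j); rewrite ?andbF ?andbT ?mul0r ?mulr0.
Qed.

Lemma EkDk j : Ek j *m Dk j = 1%:M.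
Proof.
rewrite /Ek /Dk -/(Nk j) mulmxBl !mulmxDr !mul1mx mulmx1 NkNk.
by rewrite addr0 addrK.
Qed.

Lemma DkEk j : Dk j *m Ek j = 1%:M.
Proof. exact: mulmx1C (EkDk j). Qed.

Lemma delta_stepE A j : delta_step A j = A *m Ek j.
Proof.
apply/matrixP => r i; rewrite /Ek mulmxBr mulmx1 !mxE.
rewrite (bigD1 j) //= big1 => [|k kj]; last by rewrite !mxE (negbTE kj) mulr0.
rewrite !mxE eqxx /= addr0.
by case: eqP => [->|ij] /=; rewrite ?mulr0 ?subr0 ?mulr1.
Qed.

Lemma deltaM_rcons (w : seq 'I_n) j : deltaM (rcons w j) = deltaM w *m Ek j.
Proof. by rewrite /deltaM foldl_rcons delta_stepE. Qed.

Lemma deltaM_unit (w : seq 'I_n) : deltaM w \in unitmx.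
Proof.
elim/last_ind: w => [|w j IH]; first by rewrite /deltaM /= unitmx1.
by rewrite deltaM_rcons unitmx_mul IH; case: (mulmx1_unit (EkDk j)).
Qed.

Lemma Mw_rcons (w : seq 'I_n) j : Mw (rcons w j) = Dk j *m Mw w.
Proof.
have U := deltaM_unit (rcons w j).
have H : (Dk j *m Mw w) *m deltaM (rcons w j) = 1%:M.
  by rewrite deltaM_rcons /Mw mulmxA -(mulmxA (Dk j)) mulVmx ?deltaM_unit // mulmx1 DkEk.
by rewrite /Mw -[LHS]mul1mx -H mulmxK.
Qed.

Lemma Mw_delta (w : seq 'I_n) j : Mw w *m delta w j = ev j.
Proof. by rewrite /delta colE /Mw mulKmx ?deltaM_unit. Qed.

Lemma Dk_ev_same j : Dk j *m ev j = ev j.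
Proof.
rewrite /Dk mulmxDl mul1mx; apply/matrixP => r c.
rewrite !mxE big1 ?addr0 // => k _; rewrite !mxE.
by case: (k == j); rewrite ?andbF ?mul0r ?mulr0.
Qed.

Lemma Dk_ev_diff j i : i != j -> Dk j *m ev i = ev i + ev j.
Proof.
move=> ij; rewrite /Dk mulmxDl mul1mx; congr (_ + _); apply/matrixP => r c.
rewrite !mxE (bigD1 i) //= big1 => [|k ki]; last by rewrite !mxE (negbTE ki) mulr0.
rewrite !mxE !eqxx ij andbT. by rewrite addr0 (ord1 c) eqxx /= andbT mulr1.
Qed.

Fixpoint np j (prev : 'cV[int]_n) (s : seq 'cV[int]_n) : seq 'cV[int]_n :=
  match s with
  | [::] => [::]
  | x :: s' => (if x - prev == ev j then [:: Dk j *m x + ev j]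
                else [:: Dk j *m x; Dk j *m x + ev j]) ++ np j x s'
  end.

Lemma np_mem j prev s y :
  (y \in Dk j *m prev :: Dk j *m prev + ev j :: np j prev s) =
  (y \in [seq Dk j *m x | x <- prev :: s]) || (y \in [seq Dk j *m x + ev j | x <- prev :: s]).
Proof.
elim: s prev => [|x s IH] prev; first by rewrite /= !inE ?orbF.
have IHx := IH x; move: IHx; rewrite /= !inE mem_cat => IHx.
case: ifP => [/eqP E|_]; last first.
  rewrite !inE -orbA IHx.
  move: (y == Dk j *m prev) (y == Dk j *m prev + ev j) (y == Dk j *m x) (y == Dk j *m x + ev j).
  move: (y \in [seq Dk j *m x0 | x0 <- s]) (y \in [seq Dk j *m x0 + ev j | x0 <- s]).
  by do 6 case.
have E' : Dk j *m x = Dk j *m prev + ev j.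
  by rewrite -[x](subrK prev) mulmxDr E Dk_ev_same addrC.
move: IHx; rewrite !inE E'.
move: (y == Dk j *m prev) (y == Dk j *m prev + ev j) (y == Dk j *m prev + ev j + ev j).
move: (y \in [seq Dk j *m x0 | x0 <- s]) (y \in [seq Dk j *m x0 + ev j | x0 <- s]) (y \in np j x s).
by do 6 case.
Qed.

Lemma np_last j prev s :
  last (Dk j *m prev + ev j) (np j prev s) = Dk j *m last prev s + ev j.
Proof.
elim: s prev => [|x s IH] prev //=.
by case: ifP => _; rewrite last_cat /= IH.
Qed.

Lemma np_path j prev s : path unit_step prev s ->
  path unit_step (Dk j *m prev + ev j) (np j prev s).
Proof.
elim: s prev => [|x s IH] prev //= /andP[/existsP[i /eqP Hi] Hp].
case: ifP => [/eqP E|/negbT E]; rewrite cat_path /= IH // ?andbT /unit_step ?andbT.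
  apply/existsP; exists j; apply/eqP.
  by rewrite opprD addrA addrAC addrK -mulmxBr E Dk_ev_same.
have ij : i != j by apply: contraNneq E => <-; rewrite Hi.
apply/andP; split; apply/existsP.
  exists i; apply/eqP.
  by rewrite opprD addrA -mulmxBr Hi Dk_ev_diff // addrK.
by exists j; apply/eqP; rewrite addrAC subrr add0r.
Qed.

End Aux.
Arguments np {n}.

Theorem lemma3p2 (n : nat) (w : seq 'I_n) :
  exists s : seq 'cV[int]_n,
    [/\ forall x, (x \in BMw w) = (x \in 0 :: s),
        last 0 s = uw w
      & path unit_step 0 s].
Proof.
elim/last_ind: w => [|w j [s [Hm Hl Hp]]].
  by exists [::]; split => // x; rewrite /BMw /Bw /= mulmx0.
exists (ev j :: np j 0 s); split.
- move=> y.
  have -> : BMw (rcons w j) = [seq Dk j *m x | x <- BMw w] ++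
                              [seq Dk j *m x + ev j | x <- BMw w].
    rewrite /BMw /Bw rev_rcons /= -/(Bw w) map_cat -!map_comp.
    congr (_ ++ _); apply: eq_map => x /=; rewrite Mw_rcons -?mulmxA //.
    by rewrite revK mulmxDr mulmxDr Mw_delta Dk_ev_same.
  have E0 : (0 : 'cV[int]_n) = Dk j *m 0 by rewrite mulmx0.
  rewrite mem_cat (eq_mem_map _ Hm) (eq_mem_map (fun x => Dk j *m x + ev j) Hm).
  rewrite -np_mem -E0 add0r.
  by [].
- have E1 : ev j = Dk j *m 0 + ev j by rewrite mulmx0 add0r.
  rewrite /= [in last _ _]E1 np_last Hl /uw foldl_rcons addrC.
  by [].
- have E1 : ev j = Dk j *m 0 + ev j by rewrite mulmx0 add0r.
  rewrite /= [in path _ _ _]E1 np_path // andbT.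
  by apply/existsP; exists j; rewrite subr0.
Qed.
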